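(* There exist a Fuchsian group $\Gamma$ and two subsets $F_1, F_2 \subset \mathbb{H}$, each of which is a fundamental domain of $\Gamma$ in the following sense, such that $\mu(F_1) \neq \mu(F_2)$. A subset $F \subset \mathbb{H}$ is a fundamental domain of $\Gamma$ (in this sense) if: (i$'$) $F$ is open and connected; (ii) no two distinct points of $F$ are equivalent under $\Gamma$; (iii) for every $z \in \mathbb{H}$ there exists some $M \in \Gamma$ such that $Mz \in \overline{F}$, where $\overline{F}$ denotes the closure of $F$ in $\mathbb{H}$.
   Context: $\mathbb{H} = \{ z \in \mathbb{C} : \mathrm{Im}\, z > 0\}$ is the upper half-plane. A Fuchsian group is a discrete subgroup $\Gamma$ of $\mathrm{PSL}_2(\mathbb{R})$, acting on $\mathbb{H}$ by $z \mapsto Mz = \frac{az+b}{cz+d}$ for $M = \pm\begin{pmatrix} a & b \\ c & d\end{pmatrix}$. Two points $z, w \in \mathbb{H}$ are equivalent under $\Gamma$ if $w = Mz$ for some $M \in \Gamma$. $\mu$ denotes the hyperbolic area measure on $\mathbb{H}$, $d\mu = y^{-2}\,dx\,dy$ (for $z = x+iy$). *)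

(* Defs.v *)
From HB Require Import structures.
From mathcomp Require Import all_boot all_order all_algebra.
From mathcomp Require Import all_classical all_reals all_analysis.
Set Implicit Arguments. Unset Strict Implicit. Unset Printing Implicit Defensive.
Import Order.TTheory GRing.Theory Num.Theory.
Import numFieldNormedType.Exports.
Local Open Scope classical_set_scope.
Local Open Scope ring_scope.

Section Hyperbolic.
Variable R : realType.

(* The upper half-plane, points z = x + i y encoded as pairs (x, y). *)
Definition upper_half_plane : set (R * R) := [set z | 0 < z.2].

(* Moebius action z |-> (a z + b)/(c z + d) of a real 2x2 matrix
   [[a, b], [c, d]], written out in real and imaginary parts:
   (a z + b)/(c z + d) = (a z + b)(c zbar + d) / |c z + d|^2. *)
Definition mob (M : 'M[R]_2) (z : R * R) : R * R :=
  let a := M 0 0 in let b := M 0 1 in let c := M 1 0 in let d := M 1 1 in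
  let x := z.1 in let y := z.2 in
  let D := (c * x + d) ^+ 2 + (c * y) ^+ 2 in
  ((a * c * (x ^+ 2 + y ^+ 2) + (a * d + b * c) * x + b * d) / D,
   (a * d - b * c) * y / D).

(* A subgroup of SL_2(R) containing -1, i.e. the full preimage of a subgroup
   of PSL_2(R) = SL_2(R)/{+-1}. *)
Definition SL2_subgroup_pm (G : set 'M[R]_2) : Prop :=
  [/\ forall M, G M -> \det M = 1,
      G 1%:M, G (- 1%:M),
      (forall M N, G M -> G N -> G (M *m N)) &
      (forall M, G M -> G (invmx M))].

(* Discreteness (entrywise topology on 2x2 matrices, i.e. that of R^4). *)
Definition discrete_mx (G : set 'M[R]_2) : Prop :=
  forall M, G M -> exists2 e : R, 0 < e &
    forall N, G N -> (forall i j, `|N i j - M i j| < e) -> N = M.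

Definition fuchsian (G : set 'M[R]_2) : Prop :=
  SL2_subgroup_pm G /\ discrete_mx G.

Definition fundamental_domain (G : set 'M[R]_2) (F : set (R * R)) : Prop :=
  [/\ F `<=` upper_half_plane,
      open F /\ connected F,
      (forall z w, F z -> F w -> forall M, G M -> mob M z = w -> z = w) &
      (forall z, upper_half_plane z ->
         exists2 M, G M & (closure F `&` upper_half_plane) (mob M z))].

Definition hyp_area (A : set (R * R)) : \bar R :=
  (\int[(@lebesgue_measure R) \x (@lebesgue_measure R)]_(z in A)
     ((z.2 ^+ 2)^-1)%:E)%E.

End Hyperbolic.

(* Main.v *)
Require Import Defs.
From HB Require Import structures.
From mathcomp Require Import all_boot all_order all_algebra.
From mathcomp Require Import all_classical all_reals all_analysis.
From mathcomp Require Import measurable_realfun.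
From mathcomp Require Import ring lra.
Local Open Scope classical_set_scope.

Module Aux.
Set Implicit Arguments. Unset Strict Implicit. Unset Printing Implicit Defensive.
Import Order.TTheory GRing.Theory Num.Theory.
Import numFieldNormedType.Exports.
Section S.
Variable R : realType.
Local Open Scope ring_scope.

Definition G0 : set 'M[R]_2 := [set M | M = 1%:M \/ M = - 1%:M].

Lemma G0_mob M z : G0 M -> mob M z = z.
Proof.
case: z => x y.
move=> [->|->]; rewrite /mob !mxE /=; congr (_, _); by rewrite !(mul1r,mul0r,mulr0,mulr1,oppr0,addr0,add0r,subr0,mulN1r,opprK,expr1n,sqrrN,invr1,divr1,sub0r,expr0n).
Qed.

Lemma N1E : - 1%:M = (-1)%:M :> 'M[R]_2.
Proof. by apply/matrixP=> i j; rewrite !mxE; case: (i == j); rewrite ?mulr1n ?mulr0n ?oppr0. Qed.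

Lemma G0_fuchsian : fuchsian G0.
Proof.
split.
  split.
  - by move=> M [->|->]; rewrite ?det1 // N1E det_scalar expr2 mulrNN mulr1.
  - by left.
  - by right.
  - move=> M N [->|->] [->|->]; rewrite ?mul1mx ?mulNmx ?mul1mx ?opprK; by [left|right].
  - move=> M [->|->]; rewrite ?invmx1; [by left|].
    by right; rewrite N1E invmx_scalar invrN invr1.
move=> M HM; exists 1; first exact: ltr01.
move=> N HN Hc; case: HM HN Hc => -> [->|->] // Hc; exfalso;
  move: (Hc 0 0); rewrite !mxE /= !mulr1n ltr_norml => /andP[h1 h2]; lra.
Qed.


Lemma openX (A B : set R) : open A -> open B -> open (A `*` B).
Proof.
move=> oA oB; rewrite openE => -[a b] [/= Aa Bb].
exists (A, B) => //=; split; [exact: open_nbhs_nbhs|exact: open_nbhs_nbhs].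
Qed.

Lemma cont_l (x : R) : continuous (fun y : R => (x, y)).
Proof. move=> y; exact: (cvg_pair (cvg_cst x) cvg_id). Qed.
Lemma cont_r (y : R) : continuous (fun x : R => (x, y)).
Proof. move=> x; exact: (cvg_pair cvg_id (cvg_cst y)). Qed.

Lemma connectedX (A B : set R) : connected A -> connected B -> connected (A `*` B).
Proof.
move=> cA cB.
have [->|/set0P[a0 Aa0]] := eqVneq A set0.
  by rewrite set0X; exact: connected0.
have [->|/set0P[b0 Bb0]] := eqVneq B set0.
  by rewrite setX0; exact: connected0.
have -> : A `*` B = \bigcup_(x in A) ((fun y => (x, y)) @` B `|` (fun x' => (x', b0)) @` A).
  apply/seteqP; split.
    move=> [x y] [/= Ax By]; exists x => //; left; by exists y.
  by move=> [x y] [x' Ax' [[y' By' [<- <-]]|[x'' Ax'' [<- <-]]]]; split.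
apply: bigcup_connected.
  exists (a0, b0) => x Ax; right; by exists a0.
move=> x Ax; apply: connectedU.
- by exists (x, b0); split; [exists b0|exists x].
- by apply: connected_continuous_connected => //; apply: continuous_subspaceT; exact: cont_l.
- by apply: connected_continuous_connected => //; apply: continuous_subspaceT; exact: cont_r.
Qed.

Lemma connected_itv (i : interval R) : connected [set` i].
Proof. by apply/connected_intervalP; exact: interval_is_interval. Qed.



Notation RT := (measurableTypeR R).
Notation T2 := (RT * RT)%type.
Definition ff (z : T2) : \bar R := ((z.2 ^+ 2)^-1)%:E.

Lemma H_eq : @upper_half_plane R = [set: R] `*` `]0, +oo[%classic.
Proof.
apply/seteqP; split => -[x y] /=; rewrite /upper_half_plane /=.
  by move=> y0; split => //=; rewrite in_itv /= andbT.
by move=> [_ /=]; rewrite in_itv /= andbT.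
Qed.

Lemma mH : measurable (@upper_half_plane R : set T2).
Proof. by rewrite H_eq; apply: measurableX. Qed.

Lemma mff : measurable_fun (@upper_half_plane R : set T2) ff.
Proof.
apply/measurable_EFinP.
apply: (@measurable_comp _ _ _ _ _ _ (`]0, +oo[%classic : set RT) (fun y : RT => (y ^+ 2)^-1) _ snd).
- exact: measurable_itv.
- by move=> y [[a b] /= b0 <-]; rewrite /= in_itv /= andbT.
- apply: open_continuous_measurable_fun; first exact: interval_open.
  move=> y; rewrite inE /= in_itv /= andbT => y0.
  apply: (@continuousV R R (fun y : R => y ^+ 2) y).
    by rewrite expf_neq0 // gt_eqF.
  exact: exprn_continuous.
- exact: measurable_funS (measurable_snd).
Qed.


Local Open Scope ereal_scope.
Notation mu := ((@lebesgue_measure R) \x (@lebesgue_measure R)).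

Lemma rect_sub_H (a b c d : R) : (0 < c)%R ->
  ((`]a, b[%classic `*` `]c, d[%classic) : set T2) `<=` @upper_half_plane R.
Proof.
move=> c0 [x y] [_ /=]; rewrite in_itv /= => /andP[cy _].
by rewrite /upper_half_plane /=; apply: lt_trans cy.
Qed.

Lemma mrect (a b c d : R) : measurable ((`]a, b[%classic `*` `]c, d[%classic) : set T2).
Proof. by apply: measurableX; exact: measurable_itv. Qed.

Lemma mu_rect (a b c d : R) : (a < b)%R -> (c < d)%R ->
  mu ((`]a, b[%classic `*` `]c, d[%classic) : set T2) = ((b - a) * (d - c))%:E.
Proof.
move=> ab cd; rewrite product_measure1E; try exact: measurable_itv.
have h1 := @lebesgue_measure_itv R `]a, b[; have h2 := @lebesgue_measure_itv R `]c, d[.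
rewrite /= !lte_fin ab cd -!EFinB in h1 h2.
by rewrite [X in X * _]h1 [X in _ * X]h2 -EFinM.
Qed.

Lemma area_rect_le (a b c d c0 : R) : (0 < c0)%R -> (c0 <= c)%R -> (a < b)%R -> (c < d)%R ->
  hyp_area ((`]a, b[%classic `*` `]c, d[%classic) : set T2) <= ((b - a) * (d - c) / c0 ^+ 2)%:E.
Proof.
move=> c00 c0c ab cd; rewrite /hyp_area.
apply: (@le_trans _ _ (\int[mu]_(z in ((`]a, b[%classic `*` `]c, d[%classic) : set T2)) (cst (c0 ^+ 2)^-1%:E) z)).
  apply: ge0_le_integral.
  - exact: mrect.
  - by move=> z _; rewrite lee_fin invr_ge0 sqr_ge0.
  - exact: (measurable_funS mH (rect_sub_H (lt_le_trans c00 c0c)) mff).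
  - exact: measurable_cst.
  - move=> [x y] [_ /=]; rewrite in_itv /= => /andP[cy _].
    rewrite lee_fin lef_pV2 ?posrE ?exprn_gt0 //; last by apply: lt_le_trans c00 (le_trans c0c (ltW cy)).
    rewrite ler_pXn2r // ?nnegrE ?ltW //; [exact: le_lt_trans c0c cy|exact: lt_trans c00 (le_lt_trans c0c cy)].
rewrite (integral_cst _ (@mrect a b c d)).
by rewrite [X in _ * X]mu_rect // -EFinM mulrC lexx.
Qed.

Lemma area_rect_ge (a b c d : R) : (0 < c)%R -> (d <= 1)%R -> (a < b)%R -> (c < d)%R ->
  ((b - a) * (d - c))%:E <= hyp_area ((`]a, b[%classic `*` `]c, d[%classic) : set T2).
Proof.
move=> c0 d1 ab cd; rewrite /hyp_area.
apply: (@le_trans _ _ (\int[mu]_(z in ((`]a, b[%classic `*` `]c, d[%classic) : set T2)) (cst 1%:E) z)).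
  by rewrite (integral_cst _ (@mrect a b c d)) [X in _ * X]mu_rect // mul1e.
apply: ge0_le_integral.
- exact: mrect.
- by move=> z _; rewrite lee_fin.
- exact: measurable_cst.
- exact: (measurable_funS mH (rect_sub_H c0) mff).
- move=> [x y] [_ /=]; rewrite in_itv /= => /andP[cy yd].
  have y0 : (0 < y)%R by apply: lt_trans cy.
  rewrite lee_fin invf_ge1 ?exprn_gt0 //.
  rewrite expr_le1 ?ltW //; move: yd d1 => /= yd d1; lra.
Qed.


Lemma ff_ge0 z : 0 <= ff z.
Proof. by rewrite /ff lee_fin invr_ge0 sqr_ge0. Qed.

Lemma area_bigcup_le (A : nat -> set T2) : (forall k, measurable (A k)) ->
  (forall k, A k `<=` @upper_half_plane R) ->
  hyp_area (\bigcup_k A k) <= \sum_(k <oo) hyp_area (A k).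
Proof.
move=> mA AH.
have mUA : measurable (\bigcup_k A k) by exact: bigcupT_measurable.
have mfA k : measurable_fun [set: T2] (ff \_ (A k)).
  by apply/(measurable_restrictT _ (mA k)); exact: (measurable_funS mH (AH k) mff).
rewrite /hyp_area -/ff.
rewrite integral_mkcond.
under eq_fun do rewrite -/ff.
rewrite (_ : \sum_(k <oo) \int[mu]_(z in A k) ((z.2 ^+ 2)^-1)%:E =
   \sum_(k <oo) \int[mu]_z (ff \_ (A k)) z); last first.
  by apply: eq_eseriesr => k _; rewrite integral_mkcond.
rewrite -integral_nneseries //; last first.
  by move=> n z _; rewrite /patch; case: ifP => // _; exact: ff_ge0.
apply: ge0_le_integral => //.
- by move=> z _; rewrite /patch; case: ifP => // _; exact: ff_ge0.
- apply/(measurable_restrictT _ mUA).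
  apply: (measurable_funS mH _ mff) => z [k _ /AH]; done.
- apply: ge0_emeasurable_sum => //.
  by move=> n z _ _; rewrite /patch; case: ifP => // _; exact: ff_ge0.
- move=> z _; rewrite /patch; case: ifPn => //; last first.
    move=> _; apply: nneseries_ge0 => n _ _; case: ifP => // _; exact: ff_ge0.
  rewrite inE => -[m _ Amz].
  apply: le_trans (nneseries_lim_ge m.+1 _); last first.
    by move=> n _ _; case: ifP => // _; exact: ff_ge0.
  rewrite big_nat_recr //= (_ : (z \in A m) = true); last exact/mem_set.
  rewrite leeDr //; apply: sume_ge0 => n _; case: ifP => // _; exact: ff_ge0.
Qed.


Local Close Scope ereal_scope.

Definition tgt (n : nat) : R * R :=
  match @unpickle (rat * rat)%type n with
  | Some (a, b) => (ratr a, if (0 : R) < ratr b then ratr b else 1)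
  | None => (0, 1) end.

Lemma tgt_pos n : 0 < (tgt n).2.
Proof.
rewrite /tgt; case: (unpickle n) => [[a b]|] //=; case: ifP => //.
Qed.

Lemma tgt_dense x y e : 0 < y -> 0 < e ->
  exists n, `|(tgt n).1 - x| < e /\ `|(tgt n).2 - y| < e.
Proof.
move=> y0 e0.
have [a] := @rat_in_itvoo R (x - e) (x + e) ltac:(lra).
rewrite in_itv /= => /andP[a1 a2].
have [b [b0 b1 b2]] : exists b : rat, [/\ 0 < (ratr b : R), y - e < ratr b & (ratr b : R) < y].
  have [ye|ye] := lerP (y - e) 0.
    have [b] := @rat_in_itvoo R 0 y y0; rewrite in_itv /= => /andP[b1 b2].
    by exists b; split => //; lra.
  have [b] := @rat_in_itvoo R (y - e) y ltac:(lra); rewrite in_itv /= => /andP[b1 b2].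
  by exists b; split => //; lra.
exists (pickle (a, b)); rewrite /tgt pickleK /= b0.
split; rewrite ltr_norml; apply/andP; split; lra.
Qed.

Definition mV (q : R) := q / (2 * (q + 1)).
Definition MV (q : R) := q + 2.
Definition dV (q e : R) := e * (mV q) ^+ 2 / (2 * (MV q - mV q)).
Definition Vr (p q e : R) : set (R * R) :=
  `]p - dV q e, p + dV q e[%classic `*` `]mV q, MV q[%classic.
Definition LL (p : R) := p ^+ 2 + 1.
Definition dH (p e : R) := e / (16 * LL p).
Definition Hr (p e : R) : set (R * R) :=
  `]- LL p, LL p[%classic `*` `]1 - dH p e, 1 + dH p e[%classic.

Lemma mV_gt0 q : 0 < q -> 0 < mV q.
Proof. by move=> q0; rewrite /mV divr_gt0 // mulr_gt0 //; lra. Qed.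
Lemma mV_lt q : 0 < q -> mV q < q /\ mV q < 1 / 2.
Proof.
move=> q0; rewrite /mV; split.
  by rewrite ltr_pdivrMr ?mulr_gt0 //; [nra|lra].
by rewrite ltr_pdivrMr ?mulr_gt0 //; [lra|lra].
Qed.
Lemma dV_gt0 q e : 0 < q -> 0 < e -> 0 < dV q e.
Proof.
move=> q0 e0; have := mV_gt0 q0; have := mV_lt q0; rewrite /dV /MV => -[h1 h2] h3.
rewrite divr_gt0 //; [apply: mulr_gt0 => //; exact: exprn_gt0|apply: mulr_gt0; lra].
Qed.
Lemma LL_ge1 p : 1 <= LL p.
Proof. by rewrite /LL; nra. Qed.
Lemma LL_gt p : - LL p < p < LL p.
Proof. by rewrite /LL; apply/andP; split; nra. Qed.
Lemma dH_gt0 p e : 0 < e -> 0 < dH p e.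
Proof. by move=> e0; have := LL_ge1 p; rewrite /dH => h; rewrite divr_gt0 //; lra. Qed.
Lemma dH_le p e : e <= 1 -> dH p e <= 1 / 16.
Proof.
move=> e1; have := LL_ge1 p; rewrite /dH => h.
rewrite ler_pdivrMr; last lra.
lra.
Qed.


Lemma area_Vr p q e : 0 < q -> 0 < e -> (hyp_area (Vr p q e) <= e%:E)%E.
Proof.
move=> q0 e0; have m0 := mV_gt0 q0; have [m1 m2] := mV_lt q0; have d0 := dV_gt0 q0 e0.
apply: le_trans (@area_rect_le (p - dV q e) (p + dV q e) (mV q) (MV q) (mV q) m0 (lexx _) _ _) _.
- lra.
- rewrite /MV; lra.
rewrite lee_fin le_eqVlt; apply/orP; left; apply/eqP.
have hM : MV q - mV q != 0 by rewrite /MV; apply/eqP; lra.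
have hm : mV q != 0 by apply/eqP; lra.
rewrite /dV; field; rewrite hM hm //.
Qed.

Lemma area_Hr p e : 0 < e -> e <= 1 -> (hyp_area (Hr p e) <= e%:E)%E.
Proof.
move=> e0 e1; have d0 := dH_gt0 p e0; have d1 := dH_le p e1; have L1 := LL_ge1 p.
apply: le_trans (@area_rect_le (- LL p) (LL p) (1 - dH p e) (1 + dH p e) (1 / 2) _ _ _ _) _.
- lra.
- lra.
- lra.
- lra.
rewrite lee_fin le_eqVlt; apply/orP; left; apply/eqP.
have hL : LL p != 0 by apply/eqP; lra.
rewrite /dH; field; rewrite hL //.
Qed.


Definition eps (k : nat) : R := 1 / (2 ^ k.+1)%:R.
Lemma eps_gt0 k : 0 < eps k.
Proof. by rewrite /eps divr_gt0 // ltr0n expn_gt0. Qed.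
Lemma eps_le1 k : eps k <= 1.
Proof. by rewrite /eps ler_pdivrMr ?ltr0n ?expn_gt0 // mul1r ler1n expn_gt0. Qed.

Definition Rk (k : nat) : set (R * R) :=
  if odd k then Hr (tgt k./2).1 (eps k) else Vr (tgt k./2).1 (tgt k./2).2 (eps k).
Definition F2 : set (R * R) := \bigcup_k Rk k.

Lemma Rk_H k : Rk k `<=` @upper_half_plane R.
Proof.
rewrite /Rk; case: ifP => _.
  apply: rect_sub_H; have := dH_le (tgt k./2).1 (eps_le1 k); lra.
apply: rect_sub_H; exact: mV_gt0 (tgt_pos _).
Qed.

Lemma Rk_m k : measurable (Rk k : set T2).
Proof. by rewrite /Rk; case: ifP => _; exact: mrect. Qed.

Lemma Rk_open k : open (Rk k).
Proof. by rewrite /Rk; case: ifP => _; apply: openX; exact: interval_open. Qed.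

Lemma area_Rk k : (hyp_area (Rk k) <= (eps k)%:E)%E.
Proof.
rewrite /Rk; case: ifP => _.
  exact: area_Hr (eps_gt0 k) (eps_le1 k).
exact: area_Vr (tgt_pos _) (eps_gt0 k).
Qed.

Lemma area_F2 : (hyp_area F2 <= 1%:E)%E.
Proof.
apply: le_trans (area_bigcup_le Rk_m Rk_H) _.
apply: le_trans (epsilon_trick0 xpredT ler01).
apply: lee_nneseries.
  by move=> k _ _; apply: integral_ge0 => z _; exact: ff_ge0.
by move=> k _; exact: area_Rk.
Qed.


Lemma Rk_even n : Rk n.*2 = Vr (tgt n).1 (tgt n).2 (eps n.*2).
Proof. by rewrite /Rk odd_double /= half_double. Qed.
Lemma Rk_odd n : Rk n.*2.+1 = Hr (tgt n).1 (eps n.*2.+1).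
Proof. by rewrite /Rk /= odd_double /= uphalf_double. Qed.

Lemma F2_open : open F2.
Proof. by apply: bigcup_open => k _; exact: Rk_open. Qed.

Lemma F2_connected : connected F2.
Proof.
have -> : F2 = \bigcup_(n in [set: nat]) (Rk n.*2 `|` Rk n.*2.+1).
  apply/seteqP; split.
    move=> z [k _ Rz]; exists k./2 => //.
    by move: Rz; rewrite -{1}(odd_double_half k); case: (odd k); [right|left].
  by move=> z [n _ [Rz|Rz]]; [exists n.*2|exists n.*2.+1].
apply: bigcup_connected.
  exists (0, 1) => n _; right; rewrite Rk_odd; split => /=; rewrite in_itv /=.
    by have ? := LL_ge1 (tgt n).1; apply/andP; split; lra.
  by have ? := dH_gt0 (tgt n).1 (eps_gt0 n.*2.+1); apply/andP; split; lra.
move=> n _; apply: connectedU.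
- exists ((tgt n).1, 1); rewrite Rk_even Rk_odd; split; split => /=; rewrite in_itv /=.
  + by have ? := dV_gt0 (tgt_pos n) (eps_gt0 n.*2); apply/andP; split; lra.
  + by have := mV_lt (tgt_pos n); rewrite /MV; have := tgt_pos n; move=> ? [? ?]; apply/andP; split; lra.
  + exact: LL_gt.
  + by have ? := dH_gt0 (tgt n).1 (eps_gt0 n.*2.+1); apply/andP; split; lra.
- by rewrite Rk_even; apply: connectedX; exact: connected_itv.
- by rewrite Rk_odd; apply: connectedX; exact: connected_itv.
Qed.

Lemma F2_H : F2 `<=` @upper_half_plane R.
Proof. by move=> z [k _ /Rk_H]. Qed.

Lemma F2_dense z : upper_half_plane z -> closure F2 z.
Proof.
case: z => x y; rewrite /upper_half_plane /= => y0 B /nbhs_ballP [e /= e0 eB].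
have [n [h1 h2]] := tgt_dense x y0 e0.
exists (tgt n); split.
  exists n.*2 => //; rewrite Rk_even; case: (tgt n) (tgt_pos n) => p q /= q0; split => /=; rewrite in_itv /=.
    by have ? := dV_gt0 q0 (eps_gt0 n.*2); apply/andP; split; lra.
  by have := mV_lt q0; rewrite /MV; move=> [? ?]; apply/andP; split; lra.
by apply: eB; split => /=; rewrite /ball /= distrC.
Qed.


Lemma G0_fd (F : set (R * R)) : F `<=` @upper_half_plane R -> open F -> connected F ->
  (forall z, upper_half_plane z -> closure F z) -> fundamental_domain G0 F.
Proof.
move=> FH oF cF dF; split => //.
  by move=> z w _ _ M GM; rewrite G0_mob.
move=> z Hz; exists 1%:M; first by left.
by rewrite G0_mob //; [split => //; exact: dF|left].
Qed.

Lemma H_open : open (@upper_half_plane R).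
Proof. by rewrite H_eq; apply: openX; [exact: openT|exact: interval_open]. Qed.

Lemma H_connected : connected (@upper_half_plane R).
Proof.
rewrite H_eq; apply: connectedX; last exact: connected_itv.
by rewrite -set_itvE; exact: connected_itv.
Qed.

Lemma area_H : (2%:E <= hyp_area (@upper_half_plane R))%E.
Proof.
have h := @area_rect_ge 0 4 (1 / 2) 1 ltac:(lra) ltac:(lra) ltac:(lra) ltac:(lra).
apply: le_trans (le_trans _ h) _.
  by rewrite lee_fin; lra.
rewrite /hyp_area -/ff.
apply: ge0_subset_integral => //.
- exact: mrect.
- exact: mH.
- exact: mff.
- by move=> z _; exact: ff_ge0.
- by apply: rect_sub_H; lra.
Qed.

Lemma main_R : exists (G : set 'M[R]_2) (F1 F2 : set (R * R)),
    [/\ fuchsian G, fundamental_domain G F1, fundamental_domain G F2 &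
        hyp_area F1 <> hyp_area F2].
Proof.
exists G0, (@upper_half_plane R), F2; split.
- exact: G0_fuchsian.
- apply: G0_fd => //; [exact: H_open|exact: H_connected|exact: subset_closure].
- apply: G0_fd; [exact: F2_H|exact: F2_open|exact: F2_connected|exact: F2_dense].
- move=> E; have h := area_H; rewrite E in h.
  by have := le_trans h area_F2; rewrite lee_fin; lra.
Qed.

End S.

End Aux.

From mathcomp Require Import Rstruct Rstruct_topology.
From Stdlib Require Import Reals.

Theorem proposition1 :
  exists (G : set 'M[Rdefinitions.R]_2) (F1 F2 : set (Rdefinitions.R * Rdefinitions.R)),
    [/\ fuchsian G, fundamental_domain G F1, fundamental_domain G F2 &
        hyp_area F1 <> hyp_area F2].
Proof. exact: (@Aux.main_R Rdefinitions.R). Qed.
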